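(* Let $\mathcal{A}^*$ be a graded-commutative differential graded algebra over a field of characteristic zero, $\mathcal{N}^*$ a differential graded module over $\mathcal{A}^*$, $\xi\in\mathcal{A}^1$ a cocycle and $\alpha=[\xi]$. For every $r\geq2$ there is an isomorphism of graded vector spaces $\phi:MH^*_{(r)}\to\mathcal{F}^*_r$, where $\mathcal{F}^*_r$ is the $r$-th term of the deformation spectral sequence $\mathcal{F}^*_r(\mathcal{N}^*,\alpha)$, such that $\phi$ commutes with the differentials, i.e. $\phi\circ\Delta_r=d_r\circ\phi$.
   Context: A differential graded module $\mathcal{N}^*$ over $\mathcal{A}^*$ is a graded $\mathcal{A}^*$-module with a differential $d$ of degree $+1$ satisfying the Leibniz rule. Deformation spectral sequence: let $\mathcal{N}^*[[t]]$ be formal power series in $t$ with coefficients in $\mathcal{N}^*$, with differential $D_tx=dx+t\xi x$. The short exact sequence $0\to\mathcal{N}^*[[t]]\xrightarrow{t}\mathcal{N}^*[[t]]\xrightarrow{\pi}\mathcal{N}^*\to0$ ($\pi$: $t\mapsto 0$) gives an exact couple $(D,E,i,j,k)$ with $D=H^*(\mathcal{N}^*[[t]],D_t)$, $E=H^*(\mathcal{N}^* )$, $i=t$, $j=\pi_*$, $k$ the connecting homomorphism; $\mathcal{F}^*_r(\mathcal{N}^*,\alpha)$ is its spectral sequence (Massey derived couples: $E_1=E$, $E_{r+1}=\mathrm{Ker}(j_rk_r)/\mathrm{Im}(j_rk_r)$, $D_{r+1}=i(D_r)$, differential $d_r=j_rk_r$). Special Massey products: an $r$-chain starting from $a\in H^*(\mathcal{N}^*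 )$ is $\omega_1,\dots,\omega_r\in\mathcal{N}^*$ with $d\omega_1=0$, $[\omega_1]=a$, $d\omega_{s+1}=\xi\omega_s$ for $1\le s<r$. $MZ_{(r)}$ = classes from which an $r$-chain starts; $MB_{(1)}=0$ and for $r\ge2$, $MB_{(r)}$ = classes represented by $\xi\omega_{r-1}$ for some $(r-1)$-chain $(\omega_1,\dots,\omega_{r-1})$. $MH_{(r)}=MZ_{(r)}/MB_{(r)}$. $\Delta_r:MH_{(r)}\to MH_{(r)}$ (degree $1$) sends the class of $a\in MZ_{(r)}$ to the class of $\xi\omega_r$, for any $r$-chain $(\omega_1,\dots,\omega_r)$ starting from $a$ (well defined). *)

(* Defs.v *)
From HB Require Import structures.
From mathcomp Require Import all_boot all_order all_algebra.
Set Implicit Arguments. Unset Strict Implicit. Unset Printing Implicit Defensive.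
Import Order.TTheory GRing.Theory Num.Theory.
Local Open Scope ring_scope.

(* Graded objects are modelled as a total K-vector space V together with
   its homogeneous components G q (q : int), given as predicates; V is
   required to be the (internal) direct sum of the G q. *)

Section Graded.
Variable K : fieldType.

Definition subspace (V : lmodType K) (P : V -> Prop) : Prop :=
  P 0 /\ forall (c : K) x y, P x -> P y -> P (c *: x + y).

Definition graded_decomp (V : lmodType K) (G : int -> V -> Prop) : Prop :=
  [/\ forall q, subspace (G q),
      (forall x : V, exists (s : seq int) (f : int -> V),
          (forall i, G i (f i)) /\ x = \sum_(i <- s) f i) &
      (forall (s : seq int) (f : int -> V), uniq s -> (forall i, G i (f i)) ->
          \sum_(i <- s) f i = 0 -> forall i, i \in s -> f i = 0)].

Definition sgn (p : int) : K := (-1) ^+ absz p.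

Definition cgdga (A : algType K) (Ag : int -> A -> Prop) (dA : A -> A) : Prop :=
  (graded_decomp Ag
      /\ Ag 0 1
      /\ (forall p q a b, Ag p a -> Ag q b -> Ag (p + q) (a * b))
      /\ (forall (c : K) x y, dA (c *: x + y) = c *: dA x + dA y)
      /\ (forall p a, Ag p a -> Ag (p + 1) (dA a))
      /\ (forall a, dA (dA a) = 0)
      /\ (forall p a b, Ag p a -> dA (a * b) = dA a * b + sgn p *: (a * dA b))
      /\       (forall p q a b, Ag p a -> Ag q b -> a * b = sgn (p * q) *: (b * a))).

Definition dgmod (A : algType K) (Ag : int -> A -> Prop) (dA : A -> A)
    (N : lmodType K) (Ng : int -> N -> Prop) (act : A -> N -> N) (dN : N -> N)
    : Prop :=
  (graded_decomp Ng
      /\ (forall (c : K) a b x, act (c *: a + b) x = c *: act a x + act b x)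
      /\ (forall (c : K) a x y, act a (c *: x + y) = c *: act a x + act a y)
      /\ (forall x, act 1 x = x)
      /\ (forall a b x, act (a * b) x = act a (act b x))
      /\ (forall p q a x, Ag p a -> Ng q x -> Ng (p + q) (act a x))
      /\ (forall (c : K) x y, dN (c *: x + y) = c *: dN x + dN y)
      /\ (forall q x, Ng q x -> Ng (q + 1) (dN x))
      /\ (forall x, dN (dN x) = 0)
      /\       (forall p a x, Ag p a -> dN (act a x) = act (dA a) x + sgn p *: act a (dN x))).

(* An isomorphism between two subquotients Z1/B1 and Z2/B2 (B_i <= Z_i
   subspaces of V), given by a map f on representatives. *)
Definition sq_iso (V W : lmodType K) (Z1 B1 : V -> Prop) (Z2 B2 : W -> Prop)
    (f : V -> W) : Prop :=
  [/\ (forall z, Z1 z -> Z2 (f z)),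
      (forall z, B1 z -> B2 (f z)),
      (forall (c : K) z1 z2, Z1 z1 -> Z1 z2 ->
          B2 (f (c *: z1 + z2) - (c *: f z1 + f z2))),
      (forall z, Z1 z -> B2 (f z) -> B1 z) &
      (forall y, Z2 y -> exists z, Z1 z /\ B2 (f z - y))].

End Graded.

Section Deformation.
Variables (K : fieldType) (A : algType K) (N : lmodType K).
Variables (Ng : int -> N -> Prop) (act : A -> N -> N) (dN : N -> N) (xi : A).

Definition cocycle (q : int) (x : N) : Prop := Ng q x /\ dN x = 0.
Definition cobound (q : int) (x : N) : Prop :=
  exists y, Ng (q - 1) y /\ x = dN y.

(* formal power series N^q[[t]] : coefficient sequences *)
Definition sdeg (q : int) (s : nat -> N) : Prop := forall n, Ng q (s n).
Definition Dt (s : nat -> N) (n : nat) : N :=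
  dN (s n) + (if n is m.+1 then act xi (s m) else 0).
Definition tsh (s : nat -> N) (n : nat) : N := if n is m.+1 then s m else 0.
Definition scocycle (q : int) (s : nat -> N) : Prop :=
  sdeg q s /\ forall n, Dt s n = 0.
Definition scobound (q : int) (s : nat -> N) : Prop :=
  exists u, sdeg (q - 1) u /\ forall n, s n = Dt u n.

(* the exact couple: D = H(N[[t]], D_t), E = H(N), i = t, j = pi_*, and
   k the connecting homomorphism: k [e] = [y] where e = pi x, D_t x = t y. *)
Definition kconn (q : int) (e : N) (y : nat -> N) : Prop :=
  sdeg (q + 1) y /\
  exists x, [/\ sdeg q x, x 0%N = e & forall n, Dt x n = tsh y n].

(* the differential d_r = j_r k_r of the r-th derived couple, on
   representatives: d_r [e] = [j a] whenever k [e] = i^(r-1) [a]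
   (D_r = i^(r-1) D, j_r (i^(r-1) a) = [j a], k_r [e] = k e). *)
Definition dr (r : nat) (q : int) (e w : N) : Prop :=
  exists y a, [/\ kconn q e y, scocycle (q + 1) a,
     scobound (q + 1) (fun n => y n - iter r.-1 tsh a n) & w = a 0%N].

(* E_(n+1) = Z/B as a subquotient of the cochains: returns (Z, B) *)
Fixpoint EZB (n : nat) : (int -> N -> Prop) * (int -> N -> Prop) :=
  match n with
  | 0 => (cocycle, cobound)
  | n'.+1 =>
    let ZB := EZB n' in
    (fun q x => ZB.1 q x /\ exists w, dr n q x w /\ ZB.2 (q + 1) w,
     fun q x => cocycle q x /\
       exists e w, [/\ ZB.1 (q - 1) e, dr n (q - 1) e w & ZB.2 q (x - w)])
  end.

(* F_r^q = FZ r q / FB r q  (r >= 1) *)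
Definition FZ (r : nat) := (EZB r.-1).1.
Definition FB (r : nat) := (EZB r.-1).2.

Definition chain (r : nat) (q : int) (om : nat -> N) : Prop :=
  [/\ forall s, (1 <= s <= r)%N -> Ng q (om s),
      dN (om 1%N) = 0 &
      forall s, (1 <= s < r)%N -> dN (om s.+1) = act xi (om s)].

Definition chain_from (r : nat) (q : int) (a : N) (om : nat -> N) : Prop :=
  chain r q om /\ cobound q (om 1%N - a).

Definition MZ (r : nat) (q : int) (a : N) : Prop :=
  cocycle q a /\ exists om, chain_from r q a om.

Definition MB (r : nat) (q : int) (a : N) : Prop :=
  cocycle q a /\
  if (r <= 1)%N then cobound q a
  else exists om, chain r.-1 (q - 1) om /\ cobound q (a - act xi (om r.-1)).

Definition Delta (r : nat) (q : int) (a w : N) : Prop :=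
  exists om, chain_from r q a om /\ w = act xi (om r).

End Deformation.

(* Main.v *)
Require Import Defs.
From HB Require Import structures.
From mathcomp Require Import all_boot all_order all_algebra zify.
Set Implicit Arguments. Unset Strict Implicit. Unset Printing Implicit Defensive.
Import Order.TTheory GRing.Theory Num.Theory.
Local Open Scope ring_scope.

Section Work.
Variables (K : fieldType) (A : algType K) (N : lmodType K).
Variables (Ng : int -> N -> Prop) (act : A -> N -> N) (dN : N -> N) (xi : A).
Hypothesis Hsub : forall q, subspace (Ng q).
Hypothesis HdL : forall (c : K) x y, dN (c *: x + y) = c *: dN x + dN y.
Hypothesis HxL : forall (c : K) x y, act xi (c *: x + y) = c *: act xi x + act xi y.
Hypothesis Hdg : forall q x, Ng q x -> Ng (q + 1) (dN x).
Hypothesis Hxg : forall q x, Ng q x -> Ng (q + 1) (act xi x).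
Hypothesis Hdd : forall x, dN (dN x) = 0.
Hypothesis Hdx : forall x, dN (act xi x) = - act xi (dN x).
Hypothesis Hxx : forall x, act xi (act xi x) = 0.

Lemma linP (f : N -> N) : (forall (c : K) x y, f (c *: x + y) = c *: f x + f y) ->
  [/\ f 0 = 0, (forall x y, f (x + y) = f x + f y), (forall (c : K) x, f (c *: x) = c *: f x),
      (forall x, f (- x) = - f x) & (forall x y, f (x - y) = f x - f y)].
Proof.
move=> H.
have f0 : f 0 = 0 by have := H (-1) 0 0; rewrite scaler0 addr0 scaleN1r addNr.
have fD : forall x y, f (x + y) = f x + f y by move=> x y; have := H 1 x y; rewrite !scale1r.
have fZ : forall (c : K) x, f (c *: x) = c *: f x by move=> c x; have := H c x 0; rewrite !addr0 f0 addr0.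
have fN : forall x, f (- x) = - f x by move=> x; rewrite -scaleN1r fZ scaleN1r.
split => // x y; by rewrite fD fN.
Qed.

Lemma d0 : dN 0 = 0. Proof. by case: (linP HdL). Qed.
Lemma dD x y : dN (x + y) = dN x + dN y. Proof. by case: (linP HdL). Qed.
Lemma dZ c x : dN (c *: x) = c *: dN x. Proof. by case: (linP HdL). Qed.
Lemma dNN x : dN (- x) = - dN x. Proof. by case: (linP HdL). Qed.
Lemma dB x y : dN (x - y) = dN x - dN y. Proof. by case: (linP HdL). Qed.
Lemma x0 : act xi 0 = 0. Proof. by case: (linP HxL). Qed.
Lemma xD x y : act xi (x + y) = act xi x + act xi y. Proof. by case: (linP HxL). Qed.
Lemma xZ c x : act xi (c *: x) = c *: act xi x. Proof. by case: (linP HxL). Qed.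
Lemma xN x : act xi (- x) = - act xi x. Proof. by case: (linP HxL). Qed.
Lemma xB x y : act xi (x - y) = act xi x - act xi y. Proof. by case: (linP HxL). Qed.

Lemma Ng0 q : Ng q 0. Proof. by case: (Hsub q). Qed.
Lemma NgD q x y : Ng q x -> Ng q y -> Ng q (x + y).
Proof. by move=> hx hy; case: (Hsub q) => _ H; have := H 1 x y hx hy; rewrite scale1r. Qed.
Lemma NgZ q c x : Ng q x -> Ng q (c *: x).
Proof. by move=> hx; case: (Hsub q) => h0 H; have := H c x 0 hx h0; rewrite addr0. Qed.
Lemma NgN q x : Ng q x -> Ng q (- x).
Proof. by move=> hx; rewrite -scaleN1r; apply: NgZ. Qed.
Lemma NgB q x y : Ng q x -> Ng q y -> Ng q (x - y).
Proof. by move=> hx hy; apply: NgD => //; apply: NgN. Qed.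

Notation Dt := (Dt act dN xi).
Notation chain := (chain Ng act dN xi).
Notation cobound := (cobound Ng dN).
Notation cocycle := (cocycle Ng dN).
Notation MB := (MB Ng act dN xi).
Notation MZ := (MZ Ng act dN xi).
Notation dr := (dr Ng act dN xi).

Lemma Dt_ext f g k : (forall j, f j = g j) -> Dt f k = Dt g k.
Proof. by move=> H; rewrite /Defs.Dt; case: k => [|k]; rewrite !H. Qed.

Lemma Dt_sub f g k : Dt (fun j => f j - g j) k = Dt f k - Dt g k.
Proof.
rewrite /Defs.Dt dB; case: k => [|k]; first by rewrite !addr0.
rewrite xB; rewrite opprD !addrA; congr (_ + _); rewrite -!addrA; congr (_ + _); by rewrite addrC.
Qed.

Lemma Dt_add f g k : Dt (fun j => f j + g j) k = Dt f k + Dt g k.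
Proof.
rewrite /Defs.Dt dD; case: k => [|k]; first by rewrite !addr0.
rewrite xD !addrA; congr (_ + _); rewrite -!addrA; congr (_ + _); by rewrite addrC.
Qed.

Lemma Dt_scale (c : K) f k : Dt (fun j => c *: f j) k = c *: Dt f k.
Proof. rewrite /Defs.Dt dZ; case: k => [|k]; first by rewrite !addr0. by rewrite xZ scalerDr. Qed.

Lemma Dt0 k : Dt (fun _ => 0) k = 0.
Proof. by rewrite /Defs.Dt d0; case: k => [|k]; rewrite ?x0 addr0. Qed.

Lemma Dt_Dt f k : Dt (Dt f) k = 0.
Proof.
rewrite /Defs.Dt; case: k => [|k] /=; first by rewrite !addr0 Hdd.
rewrite dD Hdd add0r Hdx xD. case: k => [|k]; first by rewrite x0 !addr0 addNr.
by rewrite Hxx addr0 addNr.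
Qed.

Lemma Dt_tsh f k : Dt (tsh f) k = tsh (Dt f) k.
Proof.
rewrite /Defs.Dt /tsh; case: k => [|k]; first by rewrite d0 addr0.
by case: k => [|k]; rewrite ?x0.
Qed.

Lemma Dt_deg p f k : (forall j, Ng p (f j)) -> Ng (p + 1) (Dt f k).
Proof.
move=> H; rewrite /Defs.Dt; apply: NgD; first exact: Hdg.
case: k => [|k]; [exact: Ng0 | exact: Hxg].
Qed.

Lemma iter_tsh m (a : nat -> N) k :
  iter m (@tsh K N) a k = if (m <= k)%N then a (k - m)%N else 0.
Proof.
elim: m k => [|m IH] k /=; first by rewrite subn0.
rewrite {1}/tsh; case: k => [|k] //; by rewrite ?IH ?ltnS ?subSS.
Qed.



Definition sg (n : nat) : K := (-1) ^+ n.
Definition Pser (om : nat -> N) n k := if (k < n)%N then sg k *: om k.+1 else 0.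

Lemma sgS n : sg n.+1 = - sg n. Proof. by rewrite /sg exprS mulN1r. Qed.
Lemma sg_sq n : sg n * sg n = 1.
Proof. by rewrite /sg -exprD -signr_odd oddD addbb expr0. Qed.

Lemma chain_deg n q om s : chain n q om -> (1 <= s <= n)%N -> Ng q (om s).
Proof. by case=> H _ _; apply: H. Qed.

Lemma P_deg n q om k : chain n q om -> Ng q (Pser om n k).
Proof.
move=> hc; rewrite /Pser; case: ifP => h; last exact: Ng0.
apply: NgZ; apply: (chain_deg hc); lia.
Qed.

Lemma xdom n q om : (1 <= n)%N -> chain n q om -> act xi (dN (om n)) = 0.
Proof.
case: n => [//|m] _ [_ H1 Hs]; case: m Hs => [|m] Hs; first by rewrite H1 x0.
by rewrite Hs ?Hxx //; lia.
Qed.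

Lemma dW n q om : (1 <= n)%N -> chain n q om -> dN (act xi (om n)) = 0.
Proof. by move=> hn hc; rewrite Hdx (xdom hn hc) oppr0. Qed.

Lemma DtP n q om k : (1 <= n)%N -> chain n q om ->
  Dt (Pser om n) k = if k == n then sg n.-1 *: act xi (om n) else 0.
Proof.
move=> hn hc; case: (hc) => _ H1 Hs; rewrite /Defs.Dt /Pser; case: k => [|k].
  rewrite hn /sg expr0 scale1r H1 addr0.
  by have -> : (0 == n) = false by rewrite eq_sym; apply/negbTE; lia.
case: (ltngtP k.+1 n) => h.
- rewrite dZ xZ Hs; last by lia.
  by rewrite sgS scaleNr addNr.
- by rewrite d0 x0 addr0.
- by rewrite -h d0 add0r xZ.
Qed.

Lemma eqS_pred k n : (0 < n)%N -> (k.+1 == n) = (k == n.-1).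
Proof. by case: n. Qed.

Lemma D1 n q e om : (1 <= n)%N -> chain n q om -> cobound q (om 1%N - e) ->
  dr n q e (sg n.-1 *: act xi (om n)).
Proof.
move=> hn hc [b [hb he]].
set W := sg n.-1 *: act xi (om n).
have hW : Ng (q + 1) W by apply: NgZ; apply: Hxg; apply: (chain_deg hc); lia.
have hdW : dN W = 0 by rewrite /W dZ (dW hn hc) scaler0.
pose bs := fun k : nat => if k == 0%N then b else 0.
have hbs : forall j, Ng (q - 1) (bs j) by move=> j; rewrite /bs; case: ifP => _ //; exact: Ng0.
pose x := fun k => Pser om n k - Dt bs k.
pose y := fun k : nat => if k == n.-1 then W else 0.
pose a := fun k : nat => if k == 0%N then W else 0.
exists y, a; split.
- split; first by move=> k; rewrite /y; case: ifP => _; [exact: hW | exact: Ng0].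
  exists x; split.
  + move=> k; apply: NgB; first exact: P_deg.
    by have := Dt_deg k hbs; rewrite subrK.
  + by rewrite /x /Pser hn /sg expr0 scale1r /Defs.Dt /bs /= addr0 -he opprB addrC subrK.
  + move=> k; rewrite /x Dt_sub Dt_Dt subr0 (DtP _ hn hc) /tsh /y; case: k => [|k].
      by rewrite (_ : (0 == n) = false) //; apply/negbTE; lia.
    by rewrite (eqS_pred k hn).
- split; first by move=> k; rewrite /a; case: ifP => _; [exact: hW | exact: Ng0].
  move=> k; rewrite /Defs.Dt /a; case: k => [|k] /=; first by rewrite hdW addr0.
  rewrite d0 add0r; case: k => [|k] /=; last by rewrite x0.
  by rewrite /W xZ Hxx scaler0.
- exists (fun _ => 0); split; first by move=> _; exact: Ng0.
  move=> k; rewrite Dt0 iter_tsh /y /a.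
  case: (ltngtP k n.-1) => h.
  + by rewrite subr0.
  + rewrite (_ : (k - n.-1 == 0)%N = false); last by apply/negbTE; lia.
    by rewrite subr0.
  + by rewrite h subnn eqxx subrr.
- by [].
Qed.


Lemma D2 n q e om v : (1 <= n)%N -> chain n q om -> cobound q (om 1%N - e) ->
  dr n q e v -> MB n (q + 1) (sg n.-1 *: act xi (om n) - v).
Proof.
move=> hn hc [b [hb he]] [y [a [[hy [x [hx hx0 hxD]]] [ha haD] [u [hu huD]] ->]]].
set W := sg n.-1 *: act xi (om n).
have hW : Ng (q + 1) W by apply: NgZ; apply: Hxg; apply: (chain_deg hc); lia.
have hdW : dN W = 0 by rewrite /W dZ (dW hn hc) scaler0.
pose bs := fun k : nat => if k == 0%N then b else 0.
have hbs : forall j, Ng (q - 1) (bs j) by move=> j; rewrite /bs; case: ifP => _ //; exact: Ng0.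
pose Y := fun k => Pser om n k - x k + tsh u k - Dt bs k.
have hY : forall k, Ng q (Y k).
  move=> k; apply: NgB; last by have := Dt_deg k hbs; rewrite subrK.
  apply: NgD; first by apply: NgB; [exact: P_deg | exact: hx].
  rewrite /tsh; case: k => [|k]; first exact: Ng0.
  by have := hu k; rewrite addrK.
have Y0 : Y 0%N = 0.
  rewrite /Y /Pser hn /sg expr0 scale1r hx0 /tsh /Defs.Dt /bs /= !addr0 he.
  by rewrite subrr.
pose Z := fun j => Y j.+1.
have DZ : forall j, Dt Z j = Dt Y j.+1.
  by move=> j; rewrite /Defs.Dt; case: j => [|j] //=; rewrite Y0 x0.
have DY : forall j, Dt Y j.+1 =
    (if j.+1 == n then W else 0) - (if (n.-1 <= j)%N then a (j - n.-1)%N else 0).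
  move=> j; rewrite /Y Dt_sub Dt_add Dt_sub Dt_Dt subr0 Dt_tsh (DtP _ hn hc) hxD.
  by rewrite /tsh -huD iter_tsh addrA subrK.
have key : W - a 0%N = Dt Z n.-1.
  by rewrite DZ DY (_ : n.-1.+1 = n) ?eqxx ?leqnn ?subnn //; lia.
split.
  split; first by apply: NgB.
  have := haD 0%N; rewrite /Defs.Dt addr0 => ha0.
  by rewrite dB hdW ha0 subrr.
case: ifP => hn1.
  exists (Z 0%N); split; first by rewrite addrK; exact: hY.
  rewrite (_ : n.-1 = 0%N) in key; last by lia.
  by rewrite key /Defs.Dt addr0.
exists (fun s => sg (n.-1 - s) *: Z s.-1); split.
  rewrite addrK; split.
  - by move=> s _; apply: NgZ; apply: hY.
  - have := DZ 0%N; rewrite DY /=.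
    rewrite (_ : (1 == n) = false); last by apply/negbTE; lia.
    rewrite (_ : (n.-1 <= 0)%N = false); last by apply/negbTE; lia.
    rewrite subr0 /Defs.Dt addr0 => h0.
    by rewrite dZ h0 scaler0.
  - move=> s /andP [h1 h2].
    have hz := DZ s; rewrite DY in hz.
    rewrite (_ : (s.+1 == n) = false) in hz; last by apply/negbTE; lia.
    rewrite (_ : (n.-1 <= s)%N = false) in hz; last by apply/negbTE; lia.
    rewrite subr0 in hz.
    case: s h1 h2 hz => [//|s] _ h2 hz.
    rewrite /Defs.Dt in hz.
    have hh : dN (Z s.+1) = - act xi (Z s) by apply/eqP; rewrite -addr_eq0 hz.
    rewrite [s.+2.-1]/= [s.+1.-1]/= dZ hh xZ scalerN -scaleNr.
    rewrite (_ : (n.-1 - s.+1)%N = (n.-1 - s.+2).+1); last by lia.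
    by rewrite sgS.
- exists (Z n.-1); split; first by rewrite addrK; exact: hY.
  have e1 : n.-1 = n.-2.+1 by lia.
  rewrite key e1 subnn /sg expr0 scale1r /Defs.Dt /=.
  by rewrite addrK.
Qed.

Lemma cob0 p : cobound p 0.
Proof. by exists 0; split; [exact: Ng0 | rewrite d0]. Qed.

Lemma cob_lin p (c : K) u w : cobound p u -> cobound p w -> cobound p (c *: u + w).
Proof.
move=> [yu [hu ->]] [yw [hw ->]]; exists (c *: yu + yw); split; last by rewrite HdL.
by apply: NgD => //; apply: NgZ.
Qed.

Lemma cob_scale p (c : K) u : cobound p u -> cobound p (c *: u).
Proof. by move=> h; have := cob_lin c h (cob0 p); rewrite addr0. Qed.

Lemma chain_lin n p (c : K) o1 o2 : chain n p o1 -> chain n p o2 ->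
  chain n p (fun s => c *: o1 s + o2 s).
Proof.
move=> [g1 d1 s1] [g2 d2 s2]; split.
- by move=> s hs; apply: NgD; [apply: NgZ; apply: g1 | apply: g2].
- by rewrite HdL d1 d2 scaler0 addr0.
- by move=> s hs; rewrite HdL HxL s1 // s2.
Qed.

Lemma chain_zero n p : chain n p (fun _ => 0).
Proof. by split; [move=> s _; exact: Ng0 | rewrite d0 | move=> s _; rewrite d0 x0]. Qed.

Lemma chain_scale n p (c : K) o : chain n p o -> chain n p (fun s => c *: o s).
Proof.
move=> [g d s]; split.
- by move=> s0 hs; apply: NgZ; apply: g.
- by rewrite dZ d scaler0.
- by move=> s0 hs; rewrite dZ xZ s.
Qed.

Lemma chain_trunc m p om : chain m.+1 p om -> chain m p om.
Proof.
case=> g d s; split => //.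
- by move=> s0 hs; apply: g; lia.
- by move=> s0 hs; apply: s; lia.
Qed.

Lemma chain_ext m p om h : (1 <= m)%N -> chain m p om -> Ng p h -> dN h = act xi (om m) ->
  chain m.+1 p (fun s => if s == m.+1 then h else om s).
Proof.
move=> hm [g d s] hh dh; split.
- move=> s0 hs; case: ifP => h0 //; apply: g; move/negbT: h0 => ?; lia.
- rewrite (_ : (1 == m.+1) = false) //; apply/negbTE; lia.
- move=> s0 hs; rewrite eqSS.
  rewrite (_ : (s0 == m.+1) = false); last by apply/negbTE; lia.
  case: eqP => [->|hne] //; apply: s; move/eqP: hne => ?; lia.
Qed.

Lemma cob_MB n p u : cobound p u -> MB n p u.
Proof.
move=> [y [hy ->]]; split.
  by split; [have := Hdg hy; rewrite subrK | exact: Hdd].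
case: ifP => _; first by exists y.
exists (fun _ => 0); split; first exact: chain_zero.
by exists y; split => //; rewrite x0 subr0.
Qed.

Lemma MB_lin n p (c : K) u w : MB n p u -> MB n p w -> MB n p (c *: u + w).
Proof.
move=> [[hu du] Hu] [[hw dw] Hw]; split.
  split; first by apply: NgD => //; apply: NgZ.
  by rewrite HdL du dw scaler0 addr0.
move: Hu Hw; case: ifP => _; first exact: cob_lin.
move=> [o1 [c1 b1]] [o2 [c2 b2]]; exists (fun s => c *: o1 s + o2 s); split.
  exact: chain_lin.
have := cob_lin c b1 b2.
by rewrite HxL scalerBr opprD addrACA.
Qed.

Lemma MB_scale n p (c : K) u : MB n p u -> MB n p (c *: u).
Proof. by move=> h; have := MB_lin c h (cob_MB n (cob0 p)); rewrite addr0. Qed.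

Lemma MB_sub n p u w : MB n p u -> MB n p w -> MB n p (u - w).
Proof. by move=> hu hw; have := MB_lin (-1) hw hu; rewrite scaleN1r addrC. Qed.

Lemma L_shift n p om v : (1 <= n)%N -> chain n p om -> MB n (p + 1) (v - act xi (om n)) ->
  exists mu, [/\ chain n p mu, mu 1%N = om 1%N & cobound (p + 1) (v - act xi (mu n))].
Proof.
move=> hn hc [_ H]; move: H; case: ifP => hn1 H.
  by exists om.
case: H => [eta [he hb]]; rewrite addrK in he.
exists (fun s => om s + (if (2 <= s)%N then eta s.-1 else 0)); split.
- case: hc he => g d s [g' d' s']; split.
  + move=> s0 hs; apply: NgD; first exact: g.
    case: ifP => h2; last exact: Ng0.
    apply: g'; lia.
  + by rewrite ltnn addr0.
  + move=> s0 hs; rewrite dD xD s //.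
    rewrite (_ : (2 <= s0.+1)%N = true); last by lia.
    congr (_ + _); case: s0 hs => [//|s0] hs /=.
    case: s0 hs => [|s0] hs /=; first by rewrite d' x0.
    by rewrite s' //; lia.
- by rewrite /= addr0.
- rewrite (_ : (2 <= n)%N = true); last by lia.
  by rewrite xD opprD addrA.
Qed.

Notation EZB := (EZB Ng act dN xi).

Lemma EZB_char n : forall q e,
  ((EZB n).1 q e <-> MZ n.+1 q e) /\ ((EZB n).2 q e <-> MB n.+1 q e).
Proof.
elim: n => [|n IH] q e.
  split; split.
  - move=> hc; split => //; exists (fun _ => e); split; last by rewrite subrr; exact: cob0.
    case: hc => hg hd; split => //; move=> s hs; lia.
  - by case.
  - exact: cob_MB.
  - by case.
split; split.
- move=> [hz [w [hdr hb]]].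
  move/(IH q e).1: hz => [hce [om [hc hcb]]].
  move/(IH (q + 1) w).2: hb => hbw.
  have hd2 := D2 (ltn0Sn n) hc hcb hdr.
  have h3 := MB_lin 1 hd2 hbw; rewrite scale1r subrK in h3.
  have h4 := MB_scale (sg n) h3; rewrite scalerA sg_sq scale1r in h4.
  have h5 : MB n.+1 (q + 1) (0 - act xi (om n.+1)).
    by rewrite sub0r -scaleN1r; apply: MB_scale.
  have [mu [hmu hmu1 [h [hh eh]]]] := L_shift (ltn0Sn n) hc h5.
  rewrite addrK in hh.
  split => //; exists (fun s => if s == n.+2 then - h else mu s); split.
    apply: chain_ext => //; first exact: NgN.
    by rewrite dNN -eh sub0r opprK.
  by rewrite /= hmu1.
- move=> [hce [om [hc hcb]]]; split.
    apply/(IH q e).1; split => //; exists om; split => //; exact: chain_trunc.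
  exists (sg n *: act xi (om n.+1)); split.
    exact: (D1 (ltn0Sn n) (chain_trunc hc) hcb).
  apply/(IH (q + 1) _).2; apply: cob_MB; exists (sg n *: om n.+2); split.
    by rewrite addrK; apply: NgZ; apply: (chain_deg hc); lia.
  by rewrite dZ; case: hc => _ _ s; rewrite s //; lia.
- move=> [hv [e0 [w [hze hdr hb]]]].
  move/(IH (q - 1) e0).1: hze => [_ [om [hc hcb]]].
  move/(IH q _).2: hb => hb.
  have hd2 := D2 (ltn0Sn n) hc hcb hdr; rewrite subrK in hd2.
  have h3 := MB_sub hb hd2.
  rewrite (_ : e - w - (sg n.+1.-1 *: act xi (om n.+1) - w) = e - sg n *: act xi (om n.+1)) in h3;
    last by rewrite opprB addrA subrK.
  have h4 : MB n.+1 (q - 1 + 1) (e - act xi ((fun s => sg n *: om s) n.+1)).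
    by rewrite subrK /= xZ.
  have [mu [hmu _ hcob]] := L_shift (ltn0Sn n) (chain_scale (sg n) hc) h4.
  split => //=; exists mu; split => //; by rewrite subrK in hcob.
- move=> [hv H]; move: H => /= [om [hc hcob]]; split => //.
  exists (sg n *: om 1%N), (act xi (om n.+1)); split.
  + apply/(IH (q - 1) _).1; split.
      by case: hc => g d _; split; [apply: NgZ; apply: g | rewrite dZ d scaler0].
    exists (fun s => sg n *: om s); split; first exact: chain_scale.
    by rewrite subrr; exact: cob0.
  + have hc0 : cobound (q - 1) ((fun s => sg n *: om s) 1%N - sg n *: om 1%N).
      by rewrite subrr; exact: cob0.
    have := D1 (ltn0Sn n) (chain_scale (sg n) hc) hc0.
    by rewrite /= xZ scalerA sg_sq scale1r.
  + by apply/(IH q _).2; apply: cob_MB.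
Qed.



Lemma MZ_scale n p (c : K) u : MZ n p u -> MZ n p (c *: u).
Proof.
move=> [[hu du] [om [hc hcb]]]; split.
  by split; [apply: NgZ | rewrite dZ du scaler0].
exists (fun s => c *: om s); split; first exact: chain_scale.
by rewrite -scalerBr; apply: cob_scale.
Qed.

Lemma odd_absz1 (q : int) : odd (absz (q + 1)) = ~~ odd (absz q).
Proof.
case: q => n; first by rewrite -PoszD addn1 /=.
rewrite NegzE; case: n => [|n] //=; by rewrite subSS subn0 negbK.
Qed.

Lemma main_sec r : (2 <= r)%N ->
  exists phi : int -> N -> N,
    forall q : int,
      sq_iso (MZ r q) (MB r q) (FZ Ng act dN xi r q) (FB Ng act dN xi r q) (phi q) /\
      (forall z w y, MZ r q z ->
         Delta Ng act dN xi r q z w ->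
         dr r q (phi q z) y ->
         FB Ng act dN xi r (q + 1) (phi (q + 1) w - y)).
Proof.
move=> hr.
pose s := sg r.-1.
pose c := fun q : int => if odd (absz q) then s else 1.
have cc : forall q, c q * c q = 1 by move=> q; rewrite /c; case: ifP => _; [exact: sg_sq | rewrite mulr1].
have cS : forall q, c (q + 1) = s * c q.
  by move=> q; rewrite /c odd_absz1; case: (odd (absz q)) => /=; [rewrite /s sg_sq | rewrite mulr1].
have hr1 : r.-1.+1 = r by rewrite prednK //; lia.
have EZ : forall q e, FZ Ng act dN xi r q e <-> MZ r q e.
  by move=> q e; rewrite /FZ; have := (EZB_char r.-1 q e).1; rewrite hr1.
have EB : forall q e, FB Ng act dN xi r q e <-> MB r q e.
  by move=> q e; rewrite /FB; have := (EZB_char r.-1 q e).2; rewrite hr1.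
exists (fun q z => c q *: z) => q; split.
  split.
  - by move=> z hz; apply/EZ; apply: MZ_scale.
  - by move=> z hz; apply/EB; apply: MB_scale.
  - move=> c0 z1 z2 _ _; apply/EB.
    rewrite scalerDr !scalerA mulrC subrr; apply: cob_MB; exact: cob0.
  - by move=> z hz /EB hb; have := MB_scale (c q) hb; rewrite scalerA cc scale1r.
  - move=> y /EZ hy; exists (c q *: y); split; first exact: MZ_scale.
    apply/EB; rewrite scalerA cc scale1r subrr; apply: cob_MB; exact: cob0.
move=> z w y hz [om [[hc hcb] ->]] hdr.
apply/EB.
have hcb' : cobound q ((fun s => c q *: om s) 1%N - c q *: z).
  by rewrite -scalerBr; apply: cob_scale.
have := D2 (_ : (1 <= r)%N) (chain_scale (c q) hc) hcb' hdr.
by rewrite /= xZ scalerA cS; apply; lia.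
Qed.

End Work.

Theorem theorem3p6 (K : fieldType) (A : algType K) (N : lmodType K)
    (Ag : int -> A -> Prop) (dA : A -> A)
    (Ng : int -> N -> Prop) (act : A -> N -> N) (dN : N -> N) (xi : A) :
  [pchar K] =i pred0 ->
  cgdga Ag dA ->
  dgmod Ag dA Ng act dN ->
  Ag 1 xi -> dA xi = 0 ->
  forall r : nat, (2 <= r)%N ->
  exists phi : int -> N -> N,
    forall q : int,
      sq_iso (MZ Ng act dN xi r q) (MB Ng act dN xi r q)
             (FZ Ng act dN xi r q) (FB Ng act dN xi r q) (phi q) /\
      (forall z w y, MZ Ng act dN xi r q z ->
         Delta Ng act dN xi r q z w ->
         dr Ng act dN xi r q (phi q z) y ->
         FB Ng act dN xi r (q + 1) (phi (q + 1) w - y)).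
Proof.
move=> hch hA hM hxi dxi r hr.
case: hM => [[hsub _ _] [haL1 [haL2 [ha1 [haM [haG [hdL [hdG [hdd hLeib]]]]]]]]].
case: hA => [_ [_ [_ [_ [_ [_ [_ hcomm]]]]]]].
have act0 : forall x, act 0 x = 0.
  by move=> x; have := haL1 (-1) 0 0 x; rewrite scaler0 addr0 scaleN1r addNr.
have HxL : forall (c : K) x y, act xi (c *: x + y) = c *: act xi x + act xi y by move=> c x y; exact: haL2.
have Hxg : forall q x, Ng q x -> Ng (q + 1) (act xi x).
  by move=> q x h; have := haG 1 q xi x hxi h; rewrite addrC.
have Hdx : forall x, dN (act xi x) = - act xi (dN x).
  by move=> x; rewrite (hLeib 1 xi x hxi) dxi act0 add0r /sgn /= expr1 scaleN1r.
have n2 : (2%:R : K) != 0.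
  by have := hch 2%N; rewrite !inE /= => ->.
have hsq : xi * xi = 0.
  have := hcomm 1 1 xi xi hxi hxi; rewrite /sgn /= expr1 scaleN1r => h.
  have h2 : (2%:R : K) *: (xi * xi) = 0 by rewrite scaler_nat mulr2n {1}h addNr.
  by rewrite -[xi * xi]scale1r -(mulVf n2) -scalerA h2 scaler0.
have Hxx : forall x, act xi (act xi x) = 0 by move=> x; rewrite -haM hsq act0.
exact: (main_sec hsub hdL HxL hdG Hxg hdd Hdx Hxx hr).
Qed.
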